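(* Let $(R,\mathfrak{m})$ be a Noetherian local ring, let $\varphi$ be a self-map of finite length of $R$, and let $\mathfrak{a}_1,\ldots,\mathfrak{a}_s$ be (not necessarily distinct) ideals of $R$ with $\varphi(\mathfrak{a}_i)R\subseteq\mathfrak{a}_i$ for all $i$. Let $\overline\varphi$ be the self-map induced by $\varphi$ on $R/\prod_i\mathfrak{a}_i$ and $\overline\varphi_i$ the self-map induced on $R/\mathfrak{a}_i$. Then $$h_{\mathrm{alg}}\Big(\overline\varphi,R/\textstyle\prod_i\mathfrak{a}_i\Big)=\max\{h_{\mathrm{alg}}(\overline\varphi_i,R/\mathfrak{a}_i)\mid 1\le i\le s\}.$$
   Context: A self-map of finite length of a Noetherian local ring $(A,\mathfrak{n})$ is a ring endomorphism $\psi$ with $\psi(\mathfrak{n})\subseteq\mathfrak{n}$ and $\psi(\mathfrak{n})A$ $\mathfrak{n}$-primary. If $\mathfrak{a}$ is an ideal with $\varphi(\mathfrak{a})R\subseteq\mathfrak{a}$, then $\varphi$ induces a self-map of finite length of $R/\mathfrak{a}$. Put $\lambda(\psi^n):=\ell_A(A/\psi^n(\mathfrak{n})A)$; the algebraic entropy is $h_{\mathrm{alg}}(\psi,A):=\lim_{n\to\infty}\frac1n\log\lambda(\psi^n)$ (the limit exists). *)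

(* Defs.v *)
From Stdlib Require Import Reals ClassicalEpsilon.
From HB Require Import structures.
From mathcomp Require Import all_boot all_order all_algebra.

Set Implicit Arguments.
Unset Strict Implicit.
Unset Printing Implicit Defensive.

Import GRing.Theory.

Section Ideals.
Variable A : comNzRingType.

Definition is_ideal (I : A -> Prop) : Prop :=
  I 0%R /\ (forall x y, I x -> I y -> I (x + y)%R) /\
  (forall r x, I x -> I (r * x)%R).

Definition subset_pr (I J : A -> Prop) : Prop := forall x, I x -> J x.

Definition eq_pr (I J : A -> Prop) : Prop := forall x, I x <-> J x.

Definition ssubset_pr (I J : A -> Prop) : Prop :=
  subset_pr I J /\ exists x, J x /\ ~ I x.

Definition ideal_gen (S : A -> Prop) : A -> Prop :=
  fun x => forall I, is_ideal I -> subset_pr S I -> I x.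

Definition noetherian : Prop :=
  forall c : nat -> (A -> Prop), (forall k, is_ideal (c k)) ->
    (forall k, subset_pr (c k) (c k.+1)) ->
    exists N, forall k, (N <= k)%N -> subset_pr (c k) (c N).

Definition local_ring (m : A -> Prop) : Prop :=
  is_ideal m /\ ~ m 1%R /\ (forall x, ~ m x -> exists y, (x * y)%R = 1%R).

Definition primary_to (m I : A -> Prop) : Prop :=
  subset_pr I m /\ forall x, m x -> exists k, I (x ^+ k)%R.

Definition image_pr (B : Type) (f : A -> B) (S : A -> Prop) : B -> Prop :=
  fun y => exists x, S x /\ y = f x.

(* A strictly increasing chain of ideals I = c 0 ⊊ c 1 ⊊ ... ⊊ c n = A;
   chains of A-submodules of A/I correspond to such chains. *)
Definition ideal_chain (I : A -> Prop) (n : nat) : Prop :=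
  exists c : nat -> (A -> Prop),
    (forall k, is_ideal (c k)) /\ eq_pr (c 0%N) I /\ eq_pr (c n) (fun _ => True) /\
    (forall k, (k < n)%N -> ssubset_pr (c k) (c k.+1)).

(* ell_A(A/I) = n : the supremum of lengths of chains of submodules of A/I is n *)
Definition colength_is (I : A -> Prop) (n : nat) : Prop :=
  ideal_chain I n /\ forall k, ideal_chain I k -> (k <= n)%N.

(* ell_A(A/I) (meaningful when finite) *)
Definition colength (I : A -> Prop) : nat :=
  epsilon (inhabits 0%N) (fun n => colength_is I n).

Definition finite_length_selfmap (m : A -> Prop) (psi : {rmorphism A -> A}) : Prop :=
  subset_pr (image_pr psi m) m /\ primary_to m (ideal_gen (image_pr psi m)).

Definition lambda_it (m : A -> Prop) (psi : {rmorphism A -> A}) (k : nat) : nat :=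
  colength (ideal_gen (image_pr (iter k psi) m)).

Definition alg_entropy (m : A -> Prop) (psi : {rmorphism A -> A}) : R :=
  epsilon (inhabits R0)
    (fun l => Un_cv (fun k => Rdiv (ln (INR (lambda_it m psi k))) (INR k)) l).

Definition prod_ideal (s : nat) (a : 'I_s -> A -> Prop) : A -> Prop :=
  ideal_gen (fun y => exists x : 'I_s -> A, (forall i, a i (x i)) /\
                                             y = (\prod_(i < s) x i)%R).

End Ideals.

Definition quotient_map (A B : comNzRingType) (pi : {rmorphism A -> B})
  (I : A -> Prop) : Prop :=
  (forall y, exists x, pi x = y) /\ (forall x, pi x = 0%R <-> I x).

(* Main.v *)
Require Import Defs.
From Stdlib Require Import Reals ClassicalEpsilon.
From Stdlib Require Import Lra Lia List Classical.
Section RealPart.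
Local Open Scope R_scope.

Lemma Rdiv_le_0_compat (a b : R) : 0 <= a -> 0 < b -> 0 <= a / b.
Proof. intros; unfold Rdiv; apply Rmult_le_pos; [auto | left; apply Rinv_0_lt_compat; auto]. Qed.

Lemma fekete_aux (u : nat -> R) :
  (forall n k, u (n + k)%nat <= u n + u k) ->
  forall m q r, u (q * m + r)%nat <= INR q * u m + u r.
Proof. intros Hs m q r. induction q as [|q IH].
 - simpl. lra.
 - replace (S q * m + r)%nat with (m + (q*m + r))%nat by lia.
   rewrite S_INR. specialize (Hs m (q*m+r)%nat). lra.
Qed.

Lemma fekete (u : nat -> R) :
  (forall n, 0 <= u n) -> (forall n k, u (n + k)%nat <= u n + u k) ->
  exists l, Un_cv (fun k => u k / INR k) l.
Proof.
  intros H0 Hs.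
  set (E := fun x => exists n, (1 <= n)%nat /\ x = - (u n / INR n)).
  assert (HB : bound E).
  { exists 0. intros x [n [Hn ->]].
    assert (0 < INR n) by (apply lt_0_INR; lia).
    assert (0 <= u n / INR n) by (apply Rdiv_le_0_compat; auto). lra. }
  assert (HE : exists x, E x).
  { exists (- (u 1%nat / INR 1)). exists 1%nat. split; [lia|reflexivity]. }
  destruct (completeness E HB HE) as [M [HMub HMl]].
  exists (- M).
  intros eps Heps.
  assert (Hlow : forall n, (1 <= n)%nat -> - M <= u n / INR n).
  { intros n Hn. assert (HE' : E (- (u n / INR n))) by (exists n; auto).
    specialize (HMub _ HE'). lra. }
  assert (Hm : exists m, (1 <= m)%nat /\ u m / INR m < - M + eps/2).
  { apply NNPP. intro Hn.
    assert (Hub : is_upper_bound E (M - eps/2)).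
    { intros x [n [Hn1 ->]]. destruct (Rlt_or_le (u n / INR n) (-M + eps/2)) as [h|h].
      - exfalso; apply Hn; exists n; auto.
      - lra. }
    specialize (HMl _ Hub). lra. }
  destruct Hm as [m [Hm1 Hm]].
  assert (HK : exists K, 0 <= K /\ forall r, (r < m)%nat -> u r <= K).
  { clear - H0. induction m as [|m IH].
    - exists 0. split; [lra| intros; lia].
    - destruct IH as [K [HK0 HK]]. exists (Rmax K (u m)). split.
      + apply Rle_trans with K; [auto | apply Rmax_l].
      + intros r Hr. destruct (Nat.eq_dec r m) as [e|e].
        * subst; apply Rmax_r.
        * apply Rle_trans with K; [apply HK; lia | apply Rmax_l]. }
  destruct HK as [K [HK0 HK]].
  destruct (archimed_cor1 (eps / (2 * (K + 1)))) as [N [HN HN0]].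
  { apply Rdiv_lt_0_compat; lra. }
  exists N. intros n Hn.
  assert (Hn1 : (1 <= n)%nat) by lia.
  assert (Hnpos : 0 < INR n) by (apply lt_0_INR; lia).
  assert (HNpos : 0 < INR N) by (apply lt_0_INR; lia).
  assert (HNn : INR N <= INR n) by (apply le_INR; lia).
  assert (HKn : K / INR n < eps / 2).
  { assert (h1 : K / INR n <= (K + 1) / INR N).
    { unfold Rdiv. apply Rle_trans with ((K+1) * / INR n).
      - apply Rmult_le_compat_r; [left; apply Rinv_0_lt_compat; lra | lra].
      - apply Rmult_le_compat_l; [lra|]. apply Rinv_le_contravar; lra. }
    assert (h2 : (K + 1) / INR N < eps / 2).
    { assert (h3 : / INR N * (2 * (K+1)) < eps / (2 * (K + 1)) * (2 * (K+1))).
      { apply Rmult_lt_compat_r; lra. }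
      replace (eps / (2 * (K + 1)) * (2 * (K + 1))) with eps in h3 by (field; lra).
      unfold Rdiv. lra. }
    lra. }
  assert (Hm0 : (m <> 0)%nat) by lia.
  pose proof (Nat.div_mod_eq n m) as Hdm.
  pose proof (Nat.mod_upper_bound n m Hm0) as Hmod.
  set (q := (n / m)%nat) in *. set (r := (n mod m)%nat) in *.
  assert (Hun : u n <= INR q * u m + K).
  { rewrite Hdm. replace (m * q + r)%nat with (q * m + r)%nat by lia.
    pose proof (fekete_aux u Hs m q r). pose proof (HK r Hmod). lra. }
  assert (Hqm : INR q * INR m <= INR n).
  { rewrite <- mult_INR. apply le_INR. lia. }
  assert (Hmpos : 0 < INR m) by (apply lt_0_INR; lia).
  assert (Hum : 0 <= u m / INR m) by (apply Rdiv_le_0_compat; auto).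
  assert (Hup : u n / INR n <= u m / INR m + K / INR n).
  { assert (e1 : INR q * u m = INR q * INR m * (u m / INR m)) by (field; lra).
    assert (e2 : u n <= INR n * (u m / INR m) + K).
    { rewrite e1 in Hun. pose proof (Rmult_le_compat_r _ _ _ Hum Hqm). lra. }
    apply Rmult_le_reg_r with (INR n); auto.
    replace (u n / INR n * INR n) with (u n) by (field; lra).
    replace ((u m / INR m + K / INR n) * INR n) with (INR n * (u m / INR m) + K) by (field; lra).
    auto. }
  specialize (Hlow n Hn1).
  unfold Rdist. rewrite Rabs_right; lra.
Qed.

Lemma lim_le_eventually (f g : nat -> R) lf lg N :
  (forall n, (N <= n)%nat -> f n <= g n) -> Un_cv f lf -> Un_cv g lg -> lf <= lg.
Proof.
  intros H Hf Hg.
  apply (Rle_cv_lim (Un := fun n => f (n + N)%nat) (Vn := fun n => g (n + N)%nat)).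
  - intro n; apply H; lia.
  - intros e he. destruct (Hf e he) as [M HM]. exists M. intros n hn. apply HM. lia.
  - intros e he. destruct (Hg e he) as [M HM]. exists M. intros n hn. apply HM. lia.
Qed.

Lemma ev_all (I : Type) (l : list I) (P : I -> nat -> Prop) :
  (forall i, In i l -> exists N, forall k, (N <= k)%nat -> P i k) ->
  exists N, forall i k, In i l -> (N <= k)%nat -> P i k.
Proof.
  induction l as [|a l IH]; intros H.
  - exists 0%nat. intros i k [].
  - destruct (H a (or_introl eq_refl)) as [Na HNa].
    destruct IH as [N HN]. { intros i hi. apply H. right; auto. }
    exists (Nat.max Na N). intros i k [<-|hi] hk.
    + apply HNa; lia.
    + apply HN; auto; lia.
Qed.

Lemma delta_all (I : Type) (l : list I) (hv : I -> R) h :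
  (forall i, In i l -> hv i < h) -> exists d, 0 < d /\ forall i, In i l -> hv i <= h - d.
Proof.
  induction l as [|a l IH]; intros H.
  - exists 1. split; [lra| intros i []].
  - destruct IH as [d [hd Hd]]. { intros; apply H; right; auto. }
    assert (ha := H a (or_introl eq_refl)).
    exists (Rmin d (h - hv a)). split.
    + apply Rmin_glb_lt; lra.
    + intros i [<-|hi].
      * pose proof (Rmin_r d (h - hv a)). lra.
      * pose proof (Rmin_l d (h - hv a)). specialize (Hd i hi). lra.
Qed.

Lemma ent_max (I : Type) (l : list I) (Hl : forall i, In i l)
  (u : nat -> R) (v : I -> nat -> R) h (hv : I -> R) c :
  Un_cv (fun k => u k / INR k) h -> (forall i, Un_cv (fun k => v i k / INR k) (hv i)) ->
  (forall i k, v i k <= u k) -> (forall k, exists i, u k <= c + v i k) ->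
  (forall i, hv i <= h) /\ exists i, h = hv i.
Proof.
  intros Hu Hv Hle Hup.
  assert (Hle' : forall i, hv i <= h).
  { intro i. apply (lim_le_eventually _ _ _ _ 1%nat) with (2 := Hv i) (3 := Hu).
    intros n hn. assert (0 < INR n) by (apply lt_0_INR; lia).
    unfold Rdiv. apply Rmult_le_compat_r; [left; apply Rinv_0_lt_compat; auto | apply Hle]. }
  split; auto.
  apply NNPP. intro Hne.
  assert (Hlt : forall i, In i l -> hv i < h).
  { intros i _. destruct (Rle_lt_or_eq_dec _ _ (Hle' i)) as [h1|h1]; auto.
    exfalso; apply Hne; exists i; auto. }
  destruct (delta_all I l hv h Hlt) as [d [hd Hd]].
  destruct (ev_all I l (fun i k => v i k / INR k < hv i + d/3)) as [N1 HN1].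
  { intros i _. destruct (Hv i (d/3)) as [N HN]; [lra|]. exists N. intros k hk.
    specialize (HN k hk). unfold Rdist in HN. apply Rabs_def2 in HN. lra. }
  destruct (Hu (d/3)) as [N2 HN2]; [lra|].
  destruct (archimed_cor1 (d / (3 * (Rabs c + 1)))) as [N3 [HN3 HN30]].
  { apply Rdiv_lt_0_compat; [lra|]. pose proof (Rabs_pos c). lra. }
  set (k := Nat.max N1 (Nat.max N2 N3)).
  destruct (Hup k) as [i Hi].
  assert (hk : 0 < INR k) by (apply lt_0_INR; lia).
  assert (h1 := HN1 i k (Hl i) ltac:(lia)).
  assert (h2 := HN2 k ltac:(lia)). unfold Rdist in h2. apply Rabs_def2 in h2.
  assert (h3 : c / INR k < d / 3).
  { assert (HN3pos : 0 < INR N3) by (apply lt_0_INR; lia).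
    assert (HN3k : INR N3 <= INR k) by (apply le_INR; lia).
    pose proof (Rabs_pos c). pose proof (Rle_abs c).
    assert (e1 : c / INR k <= (Rabs c + 1) / INR N3).
    { unfold Rdiv. apply Rle_trans with ((Rabs c + 1) * / INR k).
      - apply Rmult_le_compat_r; [left; apply Rinv_0_lt_compat; lra | lra].
      - apply Rmult_le_compat_l; [lra|]. apply Rinv_le_contravar; lra. }
    assert (e2 : / INR N3 * (3 * (Rabs c + 1)) < d / (3 * (Rabs c + 1)) * (3 * (Rabs c + 1))).
    { apply Rmult_lt_compat_r; lra. }
    replace (d / (3 * (Rabs c + 1)) * (3 * (Rabs c + 1))) with d in e2 by (field; lra).
    unfold Rdiv in *. lra. }
  assert (h4 : u k / INR k <= c / INR k + v i k / INR k).
  { unfold Rdiv. rewrite <- Rmult_plus_distr_r. apply Rmult_le_compat_r; [left; apply Rinv_0_lt_compat; auto | auto]. }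
  specialize (Hd i (Hl i)). lra.
Qed.

Lemma ln_le (x y : R) : 0 < x -> x <= y -> ln x <= ln y.
Proof. intros hx [h|h]. left; apply ln_increasing; auto. subst; lra. Qed.

Lemma ent_spec (lam : nat -> nat) :
  (forall n, (1 <= lam n)%nat) -> (forall n k, (lam (n + k) <= lam n * lam k)%nat) ->
  Un_cv (fun k => Rdiv (ln (INR (lam k))) (INR k))
    (epsilon (inhabits R0) (fun l => Un_cv (fun k => Rdiv (ln (INR (lam k))) (INR k)) l)).
Proof.
  intros H1 Hm. apply epsilon_spec.
  apply (fekete (fun k => ln (INR (lam k)))).
  - intro n. rewrite <- ln_1. apply ln_le; [lra|]. change 1 with (INR 1). apply le_INR. apply H1.
  - intros n k. rewrite <- ln_mult.
    + apply ln_le. apply lt_0_INR. specialize (H1 (n+k)%nat). lia.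
      rewrite <- mult_INR. apply le_INR. apply Hm.
    + apply lt_0_INR. specialize (H1 n). lia.
    + apply lt_0_INR. specialize (H1 k). lia.
Qed.

Lemma ln_bound (a b c : nat) : (1 <= c)%nat -> (1 <= a)%nat -> (a <= b * c)%nat ->
  ln (INR a) <= ln (INR b) + ln (INR c).
Proof.
  intros Hc Ha Hab.
  assert (Hb : (1 <= b)%nat) by nia.
  rewrite <- ln_mult by (apply lt_0_INR; lia).
  apply ln_le. apply lt_0_INR; lia. rewrite <- mult_INR. apply le_INR. lia.
Qed.

Lemma ln_mono (a b : nat) : (1 <= a)%nat -> (a <= b)%nat -> ln (INR a) <= ln (INR b).
Proof. intros. apply ln_le. apply lt_0_INR; lia. apply le_INR; lia. Qed.

End RealPart.

From HB Require Import structures.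
From mathcomp Require Import all_boot all_order all_algebra.
From mathcomp Require Import zify ring.
Set Implicit Arguments. Unset Strict Implicit. Unset Printing Implicit Defensive.
Import GRing.Theory.

Section Alg.
Variable A : comNzRingType.
Local Open Scope ring_scope.
Implicit Types I J K M U X : A -> Prop.

Definition full : A -> Prop := fun _ => True.
Definition sumI I J : A -> Prop := fun x => exists i j, I i /\ J j /\ x = i + j.
Definition princ (y : A) : A -> Prop := fun x => exists r, x = r * y.
Definition capI I J : A -> Prop := fun x => I x /\ J x.

Definition chain_ok I K n := exists c : nat -> (A -> Prop),
  (forall k, is_ideal (c k)) /\ subset_pr I (c 0%N) /\ subset_pr (c n) K /\
  (forall k, (k < n)%N -> ssubset_pr (c k) (c k.+1)).
Definition lenle I K (B : nat) := forall n, chain_ok I K n -> (n <= B)%N.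

Lemma idl0 I : is_ideal I -> I 0. Proof. by case. Qed.
Lemma idlD I x y : is_ideal I -> I x -> I y -> I (x + y).
Proof. by case=> _ [h _]; apply: h. Qed.
Lemma idlM I r x : is_ideal I -> I x -> I (r * x).
Proof. by case=> _ [_ h]; apply: h. Qed.
Lemma idlMr I r x : is_ideal I -> I x -> I (x * r).
Proof. by move=> hI hx; rewrite mulrC; apply: idlM. Qed.
Lemma idlN I x : is_ideal I -> I x -> I (- x).
Proof. by move=> hI hx; rewrite -mulN1r; apply: idlM. Qed.
Lemma idlB I x y : is_ideal I -> I x -> I y -> I (x - y).
Proof. by move=> hI hx hy; apply: idlD => //; apply: idlN. Qed.
Lemma idl1 I : is_ideal I -> I 1 -> forall x, I x.
Proof. by move=> hI h1 x; rewrite -(mulr1 x); apply: idlM. Qed.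

Lemma full_ideal : is_ideal full. Proof. by []. Qed.
Lemma sumI_ideal I J : is_ideal I -> is_ideal J -> is_ideal (sumI I J).
Proof.
move=> hI hJ; split; [|split].
- by exists 0, 0; rewrite addr0; split; [apply: idl0|split; [apply: idl0|]].
- move=> x y [i [j [hi [hj ->]]]] [i' [j' [hi' [hj' ->]]]].
  exists (i + i'), (j + j'); split; [exact: idlD|split; [exact: idlD|]].
  by rewrite addrACA.
- move=> r x [i [j [hi [hj ->]]]]; exists (r * i), (r * j).
  by split; [exact: idlM|split; [exact: idlM|rewrite mulrDr]].
Qed.
Lemma princ_ideal y : is_ideal (princ y).
Proof.
split; [|split].
- by exists 0; rewrite mul0r.
- by move=> x z [r ->] [s ->]; exists (r + s); rewrite mulrDl.
- by move=> r x [s ->]; exists (r * s); rewrite mulrA.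
Qed.
Lemma capI_ideal I J : is_ideal I -> is_ideal J -> is_ideal (capI I J).
Proof.
move=> hI hJ; split; [|split].
- by split; apply: idl0.
- by move=> x y [h1 h2] [h3 h4]; split; apply: idlD.
- by move=> r x [h1 h2]; split; apply: idlM.
Qed.
Lemma sumI_l I J : is_ideal J -> subset_pr I (sumI I J).
Proof. by move=> hJ x hx; exists x, 0; rewrite addr0; split; [|split; [apply: idl0|]]. Qed.
Lemma sumI_r I J : is_ideal I -> subset_pr J (sumI I J).
Proof. by move=> hI x hx; exists 0, x; rewrite add0r; split; [apply: idl0|]. Qed.
Lemma sumI_min I J K : is_ideal K -> subset_pr I K -> subset_pr J K -> subset_pr (sumI I J) K.
Proof. by move=> hK h1 h2 x [i [j [hi [hj ->]]]]; apply: idlD => //; [apply: h1|apply: h2]. Qed.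
Lemma sumI_mono I J I' J' : subset_pr I I' -> subset_pr J J' -> subset_pr (sumI I J) (sumI I' J').
Proof. by move=> h1 h2 x [i [j [hi [hj ->]]]]; exists i, j; split; [apply: h1|split; [apply: h2|]]. Qed.

Lemma gen_ideal (S : A -> Prop) : is_ideal (ideal_gen S).
Proof.
split; [|split].
- by move=> I hI _; apply: idl0.
- by move=> x y hx hy I hI hS; apply: idlD => //; [apply: hx|apply: hy].
- by move=> r x hx I hI hS; apply: idlM => //; apply: hx.
Qed.
Lemma gen_sub (S : A -> Prop) : subset_pr S (ideal_gen S).
Proof. by move=> x hx I hI hS; apply: hS. Qed.
Lemma gen_min (S : A -> Prop) I : is_ideal I -> subset_pr S I -> subset_pr (ideal_gen S) I.
Proof. by move=> hI hS x hx; apply: hx. Qed.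

Lemma chain_mono (c : nat -> A -> Prop) n :
  (forall k, (k < n)%N -> ssubset_pr (c k) (c k.+1)) ->
  forall j k, (j <= k)%N -> (k <= n)%N -> subset_pr (c j) (c k).
Proof.
move=> hc j k hjk; elim: k hjk => [|k IH] hjk hkn.
- by have -> : j = 0%N by lia.
- move=> x hx; have [ej|nej] := eqVneq j k.+1; first by rewrite -ej.
  apply: (proj1 (hc k hkn)); apply: IH => //; lia.
Qed.

Lemma chain_ok_mono I K I' K' n : subset_pr I I' -> subset_pr K' K ->
  chain_ok I' K' n -> chain_ok I K n.
Proof.
move=> h1 h2 [c [hi [h0 [hn hs]]]]; exists c; split=> //; split.
- by move=> x hx; apply: h0; apply: h1.
- by split=> // x hx; apply: h2; apply: hn.
Qed.
Lemma lenle_mono I K I' K' B : subset_pr I I' -> subset_pr K' K -> lenle I K B -> lenle I' K' B.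
Proof. by move=> h1 h2 hl n hc; apply: hl; apply: chain_ok_mono hc. Qed.
Lemma lenle_le I K B B' : (B <= B')%N -> lenle I K B -> lenle I K B'.
Proof. by move=> h hl n hc; apply: leq_trans (hl n hc) h. Qed.

Lemma lenle_refl I K : subset_pr K I -> lenle I K 0.
Proof.
move=> hKI [|n] // [c [hi [h0 [hn hs]]]]; exfalso.
have [_ [x [hx1 hx0]]] := hs 0%N (ltn0Sn n).
apply: hx0; apply: h0; apply: hKI; apply: hn.
by apply: (chain_mono hs (j := 1)).
Qed.


Lemma chain_ok0 I K : is_ideal I -> subset_pr I K -> chain_ok I K 0.
Proof. by move=> hI hK; exists (fun _ => I); split=> //; split=> //; split=> // k; rewrite ltn0. Qed.

Lemma chain_ok_app X Y Z a : chain_ok X Y a -> is_ideal Z -> ssubset_pr Y Z ->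
  chain_ok X Z a.+1.
Proof.
move=> [c [hi [h0 [hn hs]]]] hZ [hYZ [z [hz1 hz2]]].
exists (fun k => if (k <= a)%N then c k else Z); split; [|split; [|split]].
- by move=> k; case: ifP.
- by [].
- by rewrite ltnn.
- move=> k hk; rewrite ltnS in hk; rewrite hk.
  case: (ltnP k a) => hka.
  + by apply: hs.
  + have ek : k = a by apply/eqP; rewrite eqn_leq hk hka.
    rewrite ek; split; first by move=> x hx; apply: hYZ; apply: hn.
    by exists z; split=> // hc; apply: hz2; apply: hn.
Qed.

Lemma dichot M c c' : is_ideal c -> is_ideal c' -> is_ideal M -> ssubset_pr c c' ->
  ssubset_pr (capI c M) (capI c' M) \/ ssubset_pr (sumI c M) (sumI c' M).
Proof.
move=> hc hc' hM [hs [x [hx1 hx2]]].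
have hsub : subset_pr (capI c M) (capI c' M) by move=> y [h1 h2]; split=> //; apply: hs.
case: (classic (exists y, capI c' M y /\ ~ capI c M y)) => [hex|hnex].
- by left.
- right; split; first by apply: sumI_mono.
  exists x; split; first by apply: sumI_l.
  move=> [y [m [hy [hm ex]]]]; apply: hx2.
  have hmc : capI c M m.
    apply: NNPP => hn; apply: hnex; exists m; split=> //; split=> //.
    have -> : m = x - y by rewrite ex addrC addKr.
    by apply: idlB => //; apply: hs.
  by rewrite ex; apply: idlD => //; case: hmc.
Qed.

Lemma subadd_aux M (c : nat -> A -> Prop) n : is_ideal M -> (forall k, is_ideal (c k)) ->
  (forall k, (k < n)%N -> ssubset_pr (c k) (c k.+1)) ->
  forall j, (j <= n)%N -> exists p q, (p + q = j)%N /\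
    chain_ok (capI (c 0%N) M) (capI (c j) M) p /\ chain_ok (sumI (c 0%N) M) (sumI (c j) M) q.
Proof.
move=> hM hi hs; elim=> [|j IH] hj.
- exists 0%N, 0%N; split=> //; split; apply: chain_ok0 => //.
  + by apply: capI_ideal.
  + by apply: sumI_ideal.
- have [p [q [epq [hp hq]]]] := IH (ltnW hj).
  case: (dichot (hi j) (hi j.+1) hM (hs j hj)) => hd.
  + exists p.+1, q; split; first by rewrite addSn epq.
    split; first by apply: chain_ok_app hp (capI_ideal _ _) hd.
    apply: chain_ok_mono hq => //; apply: sumI_mono => //; exact: (proj1 (hs j hj)).
  + exists p, q.+1; split; first by rewrite addnS epq.
    split; last by apply: chain_ok_app hq (sumI_ideal _ _) hd.
    by apply: chain_ok_mono hp => // y [h1 h2]; split=> //; apply: (proj1 (hs j hj)).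
Qed.

Lemma subadd I M K B1 B2 : is_ideal K -> is_ideal M -> subset_pr I M -> subset_pr M K ->
  lenle I M B1 -> lenle M K B2 -> lenle I K (B1 + B2).
Proof.
move=> hK hM hIM hMK h1 h2 n [c [hi [h0 [hn hs]]]].
have [p [q [epq [hp hq]]]] := subadd_aux hM hi hs (leqnn n).
rewrite -epq; apply: leq_add.
- apply: h1; apply: chain_ok_mono hp.
  + by move=> x hx; split; [apply: h0|apply: hIM].
  + by move=> x [].
- apply: h2; apply: chain_ok_mono hq.
  + by apply: sumI_r; apply: hi.
  + by apply: sumI_min => //; move=> x hx; apply: hn.
Qed.

Lemma cyclic_len I K U y B : is_ideal I -> is_ideal U ->
  subset_pr K (sumI I (princ y)) -> (forall r, U r -> I (r * y)) ->
  lenle U full B -> lenle I K B.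
Proof.
move=> hI hU hK hUy hB n [c [hi [h0 [hn hs]]]].
apply: hB; exists (fun k => fun r => c k (r * y)); split; [|split; [|split]].
- move=> k; split; [|split].
  + by rewrite mul0r; apply: idl0.
  + by move=> a b ha hb; rewrite mulrDl; apply: idlD.
  + by move=> r a ha; rewrite -mulrA; apply: idlM.
- by move=> r hr; apply: h0; apply: hUy.
- by [].
- move=> k hk; have [hsub [z [hz1 hz2]]] := hs k hk.
  split; first by move=> r hr; apply: hsub.
  have hzK : K z by apply: hn; apply: (chain_mono hs (j := k.+1)).
  have [i [w [hi' [[r ->] ez]]]] := hK z hzK.
  exists r; split.
  + have -> : r * y = z - i by rewrite ez addrC addKr.
    apply: idlB => //; apply: hsub; apply: (chain_mono hs (j := 0)) => //; first by lia.
    by apply: h0.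
  + move=> hr; apply: hz2; rewrite ez; apply: idlD => //.
    by apply: (chain_mono hs (j := 0)) => //; [lia|apply: h0].
Qed.

Lemma max_len m : local_ring m -> lenle m full 1.
Proof.
move=> [hm [hm1 hu]] [|[|n]] // [c [hi [h0 [hn hs]]]]; exfalso.
have [s1 [x [hx1 hx2]]] := hs 0%N isT.
have [s2 [z [hz1 hz2]]] := hs 1%N isT.
have hxm : ~ m x by move=> h; apply: hx2; apply: h0.
have [y hy] := hu x hxm.
apply: hz2; apply: idl1 => //; rewrite -hy mulrC; exact: idlM.
Qed.


Fixpoint span (ys : seq A) : A -> Prop :=
  match ys with [::] => fun x => x = 0 | y :: ys' => sumI (princ y) (span ys') end.

Lemma span_ideal ys : is_ideal (span ys).
Proof.
elim: ys => [|y ys IH] /=; last by apply: sumI_ideal => //; apply: princ_ideal.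
split; [by []|split].
- by move=> x z -> ->; rewrite addr0.
- by move=> r x ->; rewrite mulr0.
Qed.
Lemma span_sub I ys : is_ideal I -> (forall y, y \in ys -> I y) -> subset_pr (span ys) I.
Proof.
move=> hI; elim: ys => [|y ys IH] hy /=.
- by move=> x ->; apply: idl0.
- apply: sumI_min => //.
  + by move=> x [r ->]; apply: idlM => //; apply: hy; rewrite in_cons eqxx.
  + by apply: IH => z hz; apply: hy; rewrite in_cons hz orbT.
Qed.
Lemma mem_span ys y : y \in ys -> span ys y.
Proof.
elim: ys => [|z ys IH] //=; rewrite in_cons => /orP [/eqP ->|h].
- by apply: sumI_l; [apply: span_ideal|exists 1; rewrite mul1r].
- by apply: sumI_r; [apply: princ_ideal|apply: IH].
Qed.

Lemma list_len I U ys B : is_ideal I -> is_ideal U ->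
  (forall w, w \in ys -> forall r, U r -> I (r * w)) -> lenle U full B ->
  lenle I (sumI I (span ys)) (size ys * B).
Proof.
move=> + hU + hB; elim: ys I => [|w ws IH] I hI hw /=.
- by apply: lenle_refl => x [i [z [hi [-> ->]]]]; rewrite addr0.
- set M := sumI I (princ w).
  have hM : is_ideal M by apply: sumI_ideal => //; apply: princ_ideal.
  rewrite mulSn; apply: (@subadd _ M).
  + by apply: sumI_ideal => //; apply: sumI_ideal; [apply: princ_ideal|apply: span_ideal].
  + by [].
  + by apply: sumI_l; apply: princ_ideal.
  + apply: sumI_min => //.
    * by apply: sumI_ideal => //; apply: sumI_ideal; [apply: princ_ideal|apply: span_ideal].
    * by apply: sumI_l; apply: sumI_ideal; [apply: princ_ideal|apply: span_ideal].
    * move=> x hx; apply: sumI_r => //; apply: sumI_l; [apply: span_ideal|exact hx].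
  + apply: (@cyclic_len _ _ U w) => //.
    by move=> r hr; apply: hw; rewrite ?in_cons ?eqxx.
  + apply: (@lenle_mono M (sumI M (span ws))) => //.
    * move=> x [i [z [hi [[j [t [[r ->] [ht ->]]]] ->]]]].
      exists (i + r * w), t; split; last by split=> //; rewrite addrA.
      by exists i, (r * w); split=> //; split=> //; exists r.
    * apply: IH => // v hv r hr; apply: sumI_l; first by apply: princ_ideal.
      by apply: hw => //; rewrite in_cons hv orbT.
Qed.

Lemma pow_len I y k B : is_ideal I -> I (y ^+ k) ->
  lenle (sumI I (princ y)) full B -> lenle I full (k * B).
Proof.
move=> hI hyk hB; case: k hyk => [|k] hyk.
- by rewrite expr0 in hyk; apply: lenle_refl => x _; apply: idl1.
have claim : forall j, lenle (sumI I (princ (y ^+ j.+1))) full (j.+1 * B).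
  elim=> [|j IH]; first by rewrite expr1 mul1n.
  have hM : is_ideal (sumI I (princ (y ^+ j.+1))) by apply: sumI_ideal => //; apply: princ_ideal.
  have hI' : is_ideal (sumI I (princ (y ^+ j.+2))) by apply: sumI_ideal => //; apply: princ_ideal.
  rewrite mulSn; apply: (@subadd _ (sumI I (princ (y ^+ j.+1)))) => //.
  + apply: sumI_mono => // x [r ->]; exists (r * y); rewrite exprSr; ring.
  + apply: (@cyclic_len _ _ (sumI I (princ y)) (y ^+ j.+1)) => //.
    * by apply: sumI_ideal => //; apply: princ_ideal.
    * by apply: sumI_mono => //; apply: sumI_l; apply: princ_ideal.
    * move=> r [i [t [hi [[s ->] ->]]]]; exists (i * y ^+ j.+1), (s * y ^+ j.+2).
      split; first by apply: idlMr.
      by split; [exists s|rewrite [y ^+ j.+2]exprSr; ring].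
apply: (lenle_mono _ _ (claim k)) => //.
by apply: sumI_min => // x [r ->]; apply: idlM.
Qed.


Lemma fg I : noetherian A -> is_ideal I ->
  exists ys, (forall y, y \in ys -> I y) /\ subset_pr I (span ys).
Proof.
move=> hN hI; apply: NNPP => Hn.
have H : forall ys, exists x, (forall y, y \in ys -> I y) -> I x /\ ~ span ys x.
  move=> ys; case: (classic (forall y, y \in ys -> I y)) => hall.
  - apply: NNPP => hno; apply: Hn; exists ys; split=> // x hx.
    by apply: NNPP => hs; apply: hno; exists x.
  - by exists 0.
pose g ys := epsilon (inhabits (0 : A))
  (fun x => (forall y, y \in ys -> I y) -> I x /\ ~ span ys x).
have hg : forall ys, (forall y, y \in ys -> I y) -> I (g ys) /\ ~ span ys (g ys).
  by move=> ys; apply: (epsilon_spec (inhabits (0 : A)) _ (H ys)).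
pose F ys := g ys :: ys.
have hall : forall k y, y \in iter k F [::] -> I y.
  elim=> [|k IH] y //=; rewrite in_cons => /orP [/eqP ->|h]; last by apply: IH.
  by case: (hg _ (IH)).
have [N hNk] := hN (fun k => span (iter k F [::])) (fun k => span_ideal _)
  (fun k => sumI_r (princ_ideal _)).
have := hNk N.+1 (leqnSn N) (g (iter N F [::])).
case: (hg _ (hall N)) => _ hns h; apply: hns; apply: h.
by apply: mem_span; rewrite /= in_cons eqxx.
Qed.


Lemma ex_max (P : nat -> Prop) B n0 : P n0 -> (forall n, P n -> (n <= B)%N) ->
  exists L, P L /\ forall n, P n -> (n <= L)%N.
Proof.
move=> h0; elim: B => [|B IH] hB.
- by exists 0%N; split; [have := hB _ h0; rewrite leqn0 => /eqP <-|].
- case: (classic (P B.+1)) => hP; first by exists B.+1.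
  apply: IH => n hn; have := hB n hn; rewrite leq_eqVlt => /orP [/eqP e|//].
  by rewrite e in hn.
Qed.

Lemma chain_prepend X K L (d : nat -> A -> Prop) : is_ideal X ->
  (forall k, is_ideal (d k)) -> subset_pr (d L) K ->
  (forall k, (k < L)%N -> ssubset_pr (d k) (d k.+1)) -> ssubset_pr X (d 0%N) ->
  chain_ok X K L.+1.
Proof.
move=> hX hi hn hs h0.
exists (fun k => if k == 0%N then X else d k.-1); split; [|split; [|split]].
- by move=> k; case: ifP.
- by [].
- by [].
- by move=> [|k] hk //=; apply: hs.
Qed.

Lemma chain_insert L (c : nat -> A -> Prop) j D :
  (forall k, is_ideal (c k)) -> (forall k, (k < L)%N -> ssubset_pr (c k) (c k.+1)) ->
  (j < L)%N -> is_ideal D -> ssubset_pr (c j) D -> ssubset_pr D (c j.+1) ->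
  chain_ok (c 0%N) (c L) L.+1.
Proof.
move=> hi hs hj hD h1 h2.
exists (fun k => if (k <= j)%N then c k else if k == j.+1 then D else c k.-1).
split; [|split; [|split]].
- by move=> k; case: ifP => // _; case: ifP.
- by [].
- have -> : (L.+1 <= j)%N = false by lia.
  by have -> : (L.+1 == j.+1) = false by lia.
- move=> k hk; case: (ltngtP k j) => hkj.
  + by apply: hs; lia.
  + have -> : (k.+1 == j.+1) = false by lia.
    case: (eqVneq k j.+1) => [ek|nek].
    * by rewrite ek; exact: h2.
    * by rewrite /=; have := hs k.-1 ltac:(lia); have -> : k.-1.+1 = k by lia.
  + by rewrite hkj eqxx.
Qed.

Lemma normalize X L : is_ideal X -> chain_ok X full L -> lenle X full L ->
  exists c : nat -> A -> Prop, (forall k, is_ideal (c k)) /\ eq_pr (c 0%N) X /\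
    (forall x, c L x) /\ (forall k, (k < L)%N -> ssubset_pr (c k) (c k.+1)).
Proof.
move=> hX [c [hi [h0 [hn hs]]]] hmax.
exists c; split=> //; split; [|split=> //].
- move=> x; split; last by apply: h0.
  move=> hx; apply: NNPP => hnx.
  have := hmax L.+1 (chain_prepend hX hi hn hs (conj h0 (ex_intro _ x (conj hx hnx)))).
  by rewrite ltnn.
- move=> x; apply: NNPP => hnx.
  have hc : chain_ok X (c L) L by exists c; split; [|split; [|split]].
  have := hmax L.+1 (chain_ok_app hc full_ideal (Z := full) (conj (fun _ _ => I) (ex_intro (fun y => full y /\ ~ c L y) x (conj I hnx)))).
  by rewrite ltnn.
Qed.

Lemma simple_steps m X L (c : nat -> A -> Prop) : local_ring m ->
  (forall k, is_ideal (c k)) -> subset_pr X (c 0%N) ->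
  (forall k, (k < L)%N -> ssubset_pr (c k) (c k.+1)) -> lenle X full L ->
  forall j, (j < L)%N -> exists x, subset_pr (c j.+1) (sumI (c j) (princ x)) /\
    (forall r, m r -> c j (r * x)).
Proof.
move=> [hm [hm1 hu]] hi h0 hs hmax j hj.
have noins : forall D, is_ideal D -> ssubset_pr (c j) D -> ~ ssubset_pr D (c j.+1).
  move=> D hD h1 h2; have := hmax L.+1.
  have hc := chain_insert hi hs hj hD h1 h2.
  by rewrite ltnn; move=> H; apply/negP: (H (chain_ok_mono h0 (fun _ _ => I) hc)).
have [hsub [x [hx1 hx2]]] := hs j hj.
exists x; split.
- have hD : is_ideal (sumI (c j) (princ x)) by apply: sumI_ideal => //; apply: princ_ideal.
  move=> z hz; apply: NNPP => hnz; apply: (noins _ hD).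
  + split; first by apply: sumI_l; apply: princ_ideal.
    by exists x; split=> //; apply: sumI_r => //; exists 1; rewrite mul1r.
  + split; last by exists z.
    by apply: sumI_min => // w [r ->]; apply: idlM.
- pose Mx := (fun z => exists r, m r /\ z = r * x).
  pose D := sumI (c j) Mx.
  have hMx : is_ideal Mx.
    split; [|split].
    + by exists 0; rewrite mul0r; split=> //; apply: idl0.
    + move=> a b [r [hr ->]] [s [hs' ->]]; exists (r + s); split; last by rewrite mulrDl.
      by apply: idlD.
    + move=> t a [r [hr ->]]; exists (t * r); split; last by rewrite mulrA.
      by apply: idlM.
  have hD : is_ideal D by apply: sumI_ideal.
  have hDsub : subset_pr D (c j.+1).
    by apply: sumI_min => // w [r [hr ->]]; apply: idlM.
  have hxD : ~ D x.
    move=> [a [w [ha [[r [hr ->]] ex]]]].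
    have h1r : ~ m (1 - r).
      move=> h; apply: hm1; have -> : (1 : A) = (1 - r) + r by rewrite subrK.
      by apply: idlD.
    have [u hu'] := hu _ h1r.
    apply: hx2; have -> : x = u * a.
      have : a = (1 - r) * x by rewrite mulrBl mul1r {1}ex addrK.
      by move=> ->; rewrite mulrA [u * _]mulrC hu' mul1r.
    by apply: idlM.
  move=> r hr; apply: NNPP => hn; apply: (noins _ hD).
  + split; first by apply: sumI_l.
    by exists (r * x); split=> //; apply: sumI_r => //; exists r.
  + by split=> //; exists x; split.
Qed.


Definition rmlike (f : A -> A) := (forall x y, f (x + y) = f x + f y) /\
  (forall x y, f (x * y) = f x * f y) /\ f 1 = 1.
Definition Tmap (f : A -> A) b (c : A -> Prop) := sumI (ideal_gen (image_pr f c)) b.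

Lemma gen_mono (S S' : A -> Prop) : subset_pr S S' -> subset_pr (ideal_gen S) (ideal_gen S').
Proof. by move=> h; apply: gen_min; [apply: gen_ideal|move=> x hx; apply: gen_sub; apply: h]. Qed.

Lemma image_mono (B : comNzRingType) (f : A -> B) (S S' : A -> Prop) : subset_pr S S' -> subset_pr (image_pr f S) (image_pr f S').
Proof. by move=> h y [x [hx ->]]; exists x; split=> //; apply: h. Qed.

Lemma Tmap_mono f b c c' : is_ideal b -> subset_pr c c' -> subset_pr (Tmap f b c) (Tmap f b c').
Proof. by move=> hb h; apply: sumI_mono => //; apply: gen_mono; apply: image_mono. Qed.

Lemma Tmap_ideal f b c : is_ideal b -> is_ideal (Tmap f b c).
Proof. by move=> hb; apply: sumI_ideal => //; apply: gen_ideal. Qed.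

Lemma pre_mul_ideal I y : is_ideal I -> is_ideal (fun r => I (r * y)).
Proof.
move=> hI; split; [|split].
- by rewrite mul0r; apply: idl0.
- by move=> a b ha hb; rewrite mulrDl; apply: idlD.
- by move=> r a ha; rewrite -mulrA; apply: idlM.
Qed.

Lemma SM m f b I L1 L2 : local_ring m -> rmlike f -> is_ideal b -> is_ideal I ->
  lenle I full L1 -> lenle (sumI (ideal_gen (image_pr f m)) b) full L2 ->
  lenle (Tmap f b I) full (L1 * L2).
Proof.
move=> hloc [fD [fM f1]] hb hI h1 h2.
have [L [hL hLmax]] := ex_max (chain_ok0 hI (fun _ _ => Logic.I)) h1.
have hLL1 : (L <= L1)%N by apply: h1.
have [c [hi [h0 [hn hs]]]] := normalize hI hL hLmax.
have hsimp := simple_steps hloc hi (fun x hx => proj2 (h0 x) hx) hs hLmax.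
have hU : is_ideal (sumI (ideal_gen (image_pr f m)) b) by apply: sumI_ideal => //; apply: gen_ideal.
have claim : forall j, (j <= L)%N -> lenle (Tmap f b (c 0%N)) (Tmap f b (c j)) (j * L2).
  elim=> [|j IH] hj; first by apply: lenle_refl.
  have [x [hx1 hx2]] := hsimp j hj.
  rewrite mulSnr; apply: (@subadd _ (Tmap f b (c j))).
  - exact: Tmap_ideal.
  - exact: Tmap_ideal.
  - by apply: Tmap_mono => //; apply: (chain_mono hs) => //; lia.
  - by apply: Tmap_mono => //; apply: (proj1 (hs j hj)).
  - by apply: IH; lia.
  - apply: (@cyclic_len _ _ _ (f x)) hU _ _ h2.
    + exact: Tmap_ideal.
    + apply: sumI_min.
      * by apply: sumI_ideal; [apply: Tmap_ideal|apply: princ_ideal].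
      * apply: gen_min; first by apply: sumI_ideal; [apply: Tmap_ideal|apply: princ_ideal].
        move=> z [w [hw ->]]; have [a [t [ha [[r ->] ->]]]] := hx1 w hw.
        rewrite fD fM; exists (f a), (f r * f x); split; last by split=> //; exists (f r).
        by apply: sumI_l => //; apply: gen_sub; exists a.
      * by move=> z hz; apply: sumI_l; [apply: princ_ideal|apply: sumI_r => //; apply: gen_ideal].
    + move=> r [g [t [hg [ht ->]]]]; rewrite mulrDl; apply: idlD; first exact: Tmap_ideal.
      * have hP := pre_mul_ideal (f x) (Tmap_ideal f (c j) hb).
        apply: (gen_min hP) hg => z [r' [hr' ->]].
        by rewrite -fM; apply: sumI_l => //; apply: gen_sub; exists (r' * x); split=> //; apply: hx2.
      * by apply: sumI_r; [apply: gen_ideal|apply: idlMr].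
have hfull : subset_pr full (Tmap f b (c L)).
  move=> z _; apply: idl1; first exact: Tmap_ideal.
  by apply: sumI_l => //; apply: gen_sub; exists 1; split; [apply: hn|rewrite f1].
apply: (lenle_le (leq_mul hLL1 (leqnn L2))).
apply: (lenle_mono _ _ (claim L (leqnn L))).
- by apply: Tmap_mono => // z hz; apply: (proj1 (h0 z)).
- by [].
Qed.


Definition zeroI : A -> Prop := fun x => x = 0.
Lemma zeroI_ideal : is_ideal zeroI.
Proof. split; [by []|split]; [by move=> x y -> ->; rewrite addr0|by move=> r x ->; rewrite mulr0]. Qed.
Lemma sumI_zero X : is_ideal X -> subset_pr (sumI X zeroI) X.
Proof. by move=> hX x [i [j [hi [-> ->]]]]; rewrite addr0. Qed.

Lemma rmlike0 f : rmlike f -> f 0 = 0.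
Proof. by move=> [fD _]; have h := fD 0 0; rewrite addr0 in h; apply: (addrI (f 0)); rewrite addr0 -h. Qed.

Lemma rmlike_iter (phi : {rmorphism A -> A}) n : rmlike (iter n phi).
Proof.
elim: n => [|n [fD [fM f1]]]; first by split; [|split].
split; [|split] => /=.
- by move=> x y; rewrite fD rmorphD.
- by move=> x y; rewrite fM rmorphM.
- by rewrite f1 rmorph1.
Qed.

Lemma gen_image_pre f (S : A -> Prop) I : rmlike f -> is_ideal I -> subset_pr (image_pr f S) I ->
  forall x, ideal_gen S x -> I (f x).
Proof.
move=> [fD [fM f1]] hI hS x hx.
have hP : is_ideal (fun z => I (f z)).
  split; [|split].
  - by rewrite (rmlike0 (conj fD (conj fM f1))); apply: idl0.
  - by move=> a b ha hb; rewrite fD; apply: idlD.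
  - by move=> r a ha; rewrite fM; apply: idlM.
by apply: (gen_min hP) hx => z hz; apply: hS; exists z.
Qed.

Section Setting.
Variables (m : A -> Prop) (phi : {rmorphism A -> A}).
Hypothesis hloc : local_ring m.
Hypothesis hfl : finite_length_selfmap m phi.
Hypothesis hnoe : noetherian A.

Definition Jn n := ideal_gen (image_pr (iter n phi) m).

Lemma m_ideal : is_ideal m. Proof. by case: hloc. Qed.

Lemma Jn_sub_m n : subset_pr (Jn n) m.
Proof.
apply: gen_min; first exact: m_ideal.
elim: n => [|n IH] y [x [hx ->]] //=.
case: hfl => himg _; apply: himg; exists (iter n phi x); split=> //.
by apply: IH; exists x.
Qed.

Lemma T_sub b n k : is_ideal b -> (forall x, b x -> b (iter n phi x)) ->
  subset_pr (Tmap (iter n phi) b (sumI (Jn k) b)) (sumI (Jn (n + k)) b).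
Proof.
move=> hb hbit.
have hK : is_ideal (sumI (Jn (n + k)) b) by apply: sumI_ideal => //; apply: gen_ideal.
apply: sumI_min => //; last by apply: sumI_r => //; apply: gen_ideal.
apply: gen_min => // z [w [[j [t [hj [ht ->]]]] ->]].
have [fD _] := rmlike_iter phi n.
rewrite fD; apply: idlD => //.
- apply: sumI_l => //; apply: (gen_image_pre (rmlike_iter phi n) (gen_ideal _)) hj.
  by move=> y [x [[x' [hx' ->]] ->]]; apply: gen_sub; exists x'; rewrite iterD.
- by apply: sumI_r; [apply: gen_ideal|apply: hbit].
Qed.

Lemma SM_J b n k L1 L2 : is_ideal b -> (forall x, b x -> b (iter n phi x)) ->
  lenle (sumI (Jn k) b) full L1 -> lenle (sumI (Jn n) b) full L2 ->
  lenle (sumI (Jn (n + k)) b) full (L1 * L2).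
Proof.
move=> hb hbit h1 h2.
have := SM hloc (rmlike_iter phi n) hb (sumI_ideal (gen_ideal _) hb) h1 h2.
by apply: lenle_mono => //; apply: T_sub.
Qed.

Lemma fin_gen_aux ys : forall I, is_ideal I -> (forall y, y \in ys -> exists k, I (y ^+ k)) ->
  (exists B, lenle (sumI I (span ys)) full B) -> exists B, lenle I full B.
Proof.
elim: ys => [|y ys IH] I hI hy [B hB].
- by exists B; apply: (lenle_mono _ _ hB) => // x [i [z [hi [-> ->]]]]; rewrite addr0.
- have hI' : is_ideal (sumI I (princ y)) by apply: sumI_ideal => //; apply: princ_ideal.
  have [B' hB'] : exists B', lenle (sumI I (princ y)) full B'.
    apply: IH => //.
    + move=> z hz; have [k hk] := hy z ltac:(by rewrite in_cons hz orbT).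
      by exists k; apply: sumI_l => //; apply: princ_ideal.
    + exists B; apply: (lenle_mono _ _ hB) => //.
      move=> x [i [w [hi [[r [t [[s ->] [ht ->]]]] ->]]]].
      by exists (i + s * y), t; split; [exists i, (s * y); split=> //; split=> //; exists s|split=> //; rewrite addrA].
  have [k hk] := hy y ltac:(by rewrite in_cons eqxx).
  by exists (k * B'); exact: (pow_len hI hk hB').
Qed.

Lemma J1_fin : exists B, lenle (Jn 1) full B.
Proof.
have [ys [hys hm]] := fg hnoe m_ideal.
apply: (@fin_gen_aux ys); first exact: gen_ideal.
- move=> y hy; case: hfl => _ [_ hprim]; exact: hprim _ (hys y hy).
- exists 1%N; apply: (lenle_mono _ _ (max_len hloc)) => //.
  by move=> x hx; apply: sumI_r; [apply: gen_ideal|apply: hm].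
Qed.

Lemma Jn_fin n : exists B, lenle (Jn n) full B.
Proof.
elim: n => [|n [B hB]].
- exists 1%N; apply: (lenle_mono _ _ (max_len hloc)) => //.
  by move=> x hx; apply: gen_sub; exists x.
- have [B1 hB1] := J1_fin.
  have hz : forall x, zeroI x -> zeroI (iter 1 phi x) by move=> x ->; rewrite /= rmorph0.
  have h1 : lenle (sumI (Jn n) zeroI) full B by apply: (lenle_mono _ _ hB) => //; apply: sumI_l; apply: zeroI_ideal.
  have h2 : lenle (sumI (Jn 1) zeroI) full B1 by apply: (lenle_mono _ _ hB1) => //; apply: sumI_l; apply: zeroI_ideal.
  have := SM_J zeroI_ideal hz h1 h2; rewrite add1n => h.
  exists (B * B1); apply: (lenle_mono _ _ h) => //.
  by apply: sumI_zero; apply: gen_ideal.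
Qed.

End Setting.

End Alg.

Lemma colength_spec (B : comNzRingType) (X : B -> Prop) Bd : is_ideal X -> lenle X (@full B) Bd ->
  chain_ok X (@full B) (colength X) /\ lenle X (@full B) (colength X).
Proof.
move=> hX hB.
have [L [hL hLmax]] := ex_max (chain_ok0 hX (fun _ _ => Logic.I)) hB.
have hic : forall k, ideal_chain X k -> chain_ok X (@full B) k.
  move=> k [c [hi [h0 [hn hs]]]]; exists c; split=> //; split; last by split.
  by move=> x hx; apply: (proj2 (h0 x)).
have hcl : colength_is X L.
  split; last by move=> k hk; apply: hLmax; apply: hic.
  have [c [hi [h0 [hn hs]]]] := normalize hX hL hLmax.
  by exists c; split=> //; split=> //; split=> // x.
have hcol : colength_is X (colength X) by apply: (epsilon_spec (inhabits 0%N) _ (ex_intro _ L hcl)).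
have -> : colength X = L.
  apply/eqP; rewrite eqn_leq; apply/andP; split.
  - by apply: (proj2 hcl); case: hcol.
  - by apply: (proj2 hcol); case: hcl.
by [].
Qed.

Section Quot.
Variables (A Q : comNzRingType) (pi : {rmorphism A -> Q}) (b : A -> Prop).
Hypothesis hq : quotient_map pi b.
Local Open Scope ring_scope.

Definition pre (X : Q -> Prop) : A -> Prop := fun a => X (pi a).

Lemma pre_ideal X : is_ideal X -> is_ideal (pre X).
Proof.
move=> hX; split; [|split].
- by rewrite /pre rmorph0; apply: idl0.
- by move=> x y hx hy; rewrite /pre rmorphD; apply: idlD.
- by move=> r x hx; rewrite /pre rmorphM; apply: idlM.
Qed.

Lemma img_ideal (X : A -> Prop) : is_ideal X -> is_ideal (image_pr pi X).
Proof.
case: hq => hsurj _ hX; split; [|split].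
- by exists 0; rewrite rmorph0; split=> //; apply: idl0.
- by move=> x y [a [ha ->]] [c [hc ->]]; exists (a + c); rewrite rmorphD; split=> //; apply: idlD.
- move=> r x [a [ha ->]]; have [r' <-] := hsurj r.
  by exists (r' * a); rewrite rmorphM; split=> //; apply: idlM.
Qed.

Lemma b_pre X : is_ideal X -> subset_pr b (pre X).
Proof. by case: hq => _ hk hX x hx; rewrite /pre (proj2 (hk x) hx); apply: idl0. Qed.

Lemma transfer X n : is_ideal X -> (chain_ok X (@full Q) n <-> chain_ok (pre X) (@full A) n).
Proof.
case: hq => hsurj hk hX; split.
- move=> [c [hi [h0 [hn hs]]]].
  exists (fun k => pre (c k)); split; first by move=> k; apply: pre_ideal.
  split; first by move=> x hx; apply: h0.
  split=> // k hk'; have [hsub [z [hz1 hz2]]] := hs k hk'.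
  split; first by move=> x hx; apply: hsub.
  by have [a ea] := hsurj z; exists a; rewrite /pre ea.
- move=> [c [hi [h0 [hn hs]]]].
  exists (fun k => image_pr pi (c k)); split; first by move=> k; apply: img_ideal.
  split.
    by move=> q hqX; have [a ea] := hsurj q; exists a; split=> //; apply: h0; rewrite /pre ea.
  split=> // k hk'; have [hsub [z [hz1 hz2]]] := hs k hk'.
  split; first by apply: image_mono.
  exists (pi z); split; first by exists z.
  move=> [a [ha ea]]; apply: hz2.
  have hb : b (z - a) by apply/hk; rewrite rmorphB ea subrr.
  have hza : c k (z - a).
    apply: (chain_mono hs (j := 0)) => //; first by lia.
    by apply: h0; apply: b_pre.
  by rewrite -(subrK a z); apply: idlD.
Qed.


Lemma lambda_spec (m : A -> Prop) (phi : {rmorphism A -> A}) (psi : {rmorphism Q -> Q}) n :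
  local_ring m -> finite_length_selfmap m phi -> noetherian A ->
  (forall x, psi (pi x) = pi (phi x)) -> is_ideal b ->
  chain_ok (sumI (Jn m phi n) b) (@full A) (lambda_it (image_pr pi m) psi n) /\
  lenle (sumI (Jn m phi n) b) (@full A) (lambda_it (image_pr pi m) psi n).
Proof.
move=> hloc hfl hnoe hcomm hb.
have hit : forall k x, iter k psi (pi x) = pi (iter k phi x).
  by elim=> [|k IH] x //=; rewrite IH hcomm.
pose X := ideal_gen (image_pr (iter n psi) (image_pr pi m)).
have hX : is_ideal X by apply: gen_ideal.
have hJ : is_ideal (Jn m phi n) by apply: gen_ideal.
have hS : is_ideal (sumI (Jn m phi n) b) by apply: sumI_ideal.
have h1 : subset_pr (pre X) (sumI (Jn m phi n) b).
  move=> a ha.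
  have : image_pr pi (sumI (Jn m phi n) b) (pi a).
    apply: (gen_min (img_ideal hS)) ha => q [y [[x [hx ->]] ->]].
    exists (iter n phi x); rewrite hit; split=> //.
    by apply: sumI_l => //; apply: gen_sub; exists x.
  case: hq => _ hk [a' [ha' ea]].
  have hba : b (a - a') by apply/hk; rewrite rmorphB ea subrr.
  by rewrite -(subrK a' a); apply: idlD => //; apply: sumI_r.
have h2 : subset_pr (sumI (Jn m phi n) b) (pre X).
  apply: sumI_min; first exact: pre_ideal.
  - apply: gen_min; first exact: pre_ideal.
    move=> y [x [hx ->]]; rewrite /pre -hit; apply: gen_sub.
    by exists (pi x); split=> //; exists x.
  - exact: b_pre.
have [B hB] := Jn_fin hloc hfl hnoe n.
have hBQ : lenle X (@full Q) B.
  move=> k hk; apply: hB; apply: (chain_ok_mono (I' := pre X)) => //.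
  - by move=> x hx; apply: h2; apply: sumI_l.
  - by apply/(transfer k hX).
have [hc hl] := colength_spec hX hBQ.
split.
- apply: (chain_ok_mono (I' := pre X)) => //; by apply/(transfer _ hX).
- move=> k hk; apply: hl; apply/(transfer k hX).
  exact: (chain_ok_mono (I' := sumI (Jn m phi n) b)) hk.
Qed.

End Quot.

Section Prod.
Variables (A : comNzRingType) (s : nat) (a : 'I_s -> A -> Prop).
Hypothesis ha : forall i, is_ideal (a i).
Local Open Scope ring_scope.

Definition Wt (t : nat) := ideal_gen (fun y => exists x : 'I_s -> A,
  (forall i : 'I_s, (i < t)%N -> a i (x i)) /\ y = \prod_(i < s | (i < t)%N) x i).

Lemma prod_split (F : 'I_s -> A) t (ht : (t < s)%N) :
  \prod_(i < s | (i < t.+1)%N) F i = F (Ordinal ht) * \prod_(i < s | (i < t)%N) F i.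
Proof.
rewrite (bigD1 (Ordinal ht)) /=; last by rewrite ltnSn.
congr (_ * _); apply: eq_bigl => i.
rewrite -val_eqE /=; case: (ltngtP (val i) t) => h.
- by rewrite andbT; apply: ltnW.
- by rewrite andbT ltnS leqNgt h.
- by rewrite andbF.
Qed.

Lemma W0_one : Wt 0 1.
Proof.
apply: gen_sub; exists (fun _ => 1); split=> //.
by rewrite big_pred0.
Qed.

Lemma Ws_sub : subset_pr (Wt s) (prod_ideal a).
Proof.
apply: gen_min; first exact: gen_ideal.
move=> y [x [hx ->]]; apply: gen_sub; exists x; split.
- by move=> i; apply: hx.
- by apply: eq_bigl => i; rewrite ltn_ord.
Qed.

Lemma Wt_dec t : (t < s)%N -> subset_pr (Wt t.+1) (Wt t).
Proof.
move=> ht; apply: gen_min; first exact: gen_ideal.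
move=> y [x [hx ->]]; rewrite (prod_split _ ht); apply: (@idlM _ (Wt t)); first exact: gen_ideal.
by apply: gen_sub; exists x; split=> // i hi; apply: hx; lia.
Qed.

Lemma Wt_step t (ht : (t < s)%N) al w : a (Ordinal ht) al -> Wt t w -> Wt t.+1 (al * w).
Proof.
move=> hal hw.
have hP : is_ideal (fun w => Wt t.+1 (al * w)).
  split; [|split].
  - by rewrite mulr0; apply: (@idl0 _ (Wt t.+1)); apply: gen_ideal.
  - by move=> u v hu hv; rewrite mulrDr; apply: (@idlD _ (Wt t.+1)) => //; apply: gen_ideal.
  - by move=> r u hu; rewrite mulrCA; apply: (@idlM _ (Wt t.+1)) => //; apply: gen_ideal.
apply: (gen_min hP) hw => y [x [hx ->]].
apply: gen_sub; exists (fun i => if i == Ordinal ht then al else x i); split.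
- move=> i hi; case: eqVneq => [->|hne] //.
  apply: hx; move: hne; rewrite -val_eqE /= => hne; lia.
- rewrite prod_split eqxx; congr (_ * _); apply: eq_bigr => i hi.
  have -> : (i == Ordinal ht) = false by apply/negP => /eqP e; rewrite e /= ltnn in hi.
  by [].
Qed.

Lemma prod_sub_ai i : subset_pr (prod_ideal a) (a i).
Proof.
apply: gen_min => // y [x [hx ->]].
by rewrite (bigD1 i) //=; apply: idlMr.
Qed.

Lemma gens_exist : noetherian A -> exists H, forall t, (t < s)%N -> exists ws : seq A,
  (size ws <= H)%N /\ (forall y, y \in ws -> Wt t y) /\ subset_pr (Wt t) (span ws).
Proof.
move=> hN; suff : forall N, exists H, forall t, (t < N)%N -> exists ws : seq A,
  (size ws <= H)%N /\ (forall y, y \in ws -> Wt t y) /\ subset_pr (Wt t) (span ws) by apply.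
elim=> [|N [H hH]]; first by exists 0%N.
have [ws [hws1 hws2]] := fg hN (gen_ideal (fun y => exists x : 'I_s -> A,
  (forall i : 'I_s, (i < N)%N -> a i (x i)) /\ y = \prod_(i < s | (i < N)%N) x i)).
exists (maxn H (size ws)) => t ht.
case: (eqVneq t N) => [->|hne].
- by exists ws; split; [apply: leq_maxr|split].
- have [ws' [h1 h2]] := hH t ltac:(lia).
  by exists ws'; split=> //; apply: leq_trans h1 (leq_maxl _ _).
Qed.

Lemma UB (J : A -> Prop) H M : is_ideal J ->
  (forall t, (t < s)%N -> exists ws : seq A,
    (size ws <= H)%N /\ (forall y, y \in ws -> Wt t y) /\ subset_pr (Wt t) (span ws)) ->
  (forall i, lenle (sumI J (a i)) (@full A) M) ->
  forall t, (t <= s)%N -> lenle (sumI J (Wt t)) (@full A) (t * (H * M)).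
Proof.
move=> hJ hH hM; elim=> [|t IH] hts.
- apply: lenle_refl => x _; apply: idl1; first by apply: sumI_ideal => //; apply: gen_ideal.
  by apply: sumI_r => //; apply: W0_one.
have hWt : forall t, is_ideal (sumI J (Wt t)) by move=> t'; apply: sumI_ideal => //; apply: gen_ideal.
rewrite mulSn; apply: (@subadd _ _ (sumI J (Wt t))) => //.
- by apply: sumI_mono => //; apply: Wt_dec.
2: by apply: IH; lia.
have [ws [hws1 [hws2 hws3]]] := hH t hts.
apply: (lenle_le (leq_mul hws1 (leqnn M))).
apply: (lenle_mono (I := sumI J (Wt t.+1)) (K := sumI (sumI J (Wt t.+1)) (span ws))) => //.
- move=> x [j [w [hj [hw ->]]]]; exists (j + 0), w; split; last by split; [apply: hws3|rewrite addr0].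
  exists j, 0; split=> //; split=> //; apply: idl0; apply: gen_ideal.
- apply: (@list_len _ _ (sumI J (a (Ordinal hts)))) => //.
  + by apply: sumI_ideal.
  + move=> w hw r [j [al [hj [hal ->]]]]; rewrite mulrDl.
    exists (j * w), (al * w); split; first by apply: idlMr.
    by split=> //; apply: Wt_step => //; apply: hws2.
Qed.

End Prod.

Lemma in_In (T : eqType) (x : T) (l : seq T) : x \in l -> List.In x l.
Proof.
elim: l => [|y l IH] //; rewrite in_cons => /orP [/eqP ->|h]; [left|right; apply: IH] => //.
Qed.

Unset Implicit Arguments.
Set Strict Implicit.

Theorem mainTheorem10
  (A : comNzRingType) (m : A -> Prop) (phi : {rmorphism A -> A})
  (s : nat) (a : 'I_s -> A -> Prop)
  (Q : comNzRingType) (pi : {rmorphism A -> Q}) (psi : {rmorphism Q -> Q})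
  (Qi : 'I_s -> comNzRingType) (pii : forall i, {rmorphism A -> Qi i})
  (psii : forall i, {rmorphism Qi i -> Qi i}) :
  noetherian A -> local_ring m -> finite_length_selfmap m phi ->
  (0 < s)%N ->
  (forall i, is_ideal (a i)) ->
  (forall i, subset_pr (ideal_gen (image_pr phi (a i))) (a i)) ->
  quotient_map pi (prod_ideal a) ->
  (forall x, psi (pi x) = pi (phi x)) ->
  (forall i, quotient_map (pii i) (a i)) ->
  (forall i x, psii i (pii i x) = pii i (phi x)) ->
  (forall i, Rle (alg_entropy (image_pr (pii i) m) (psii i))
                 (alg_entropy (image_pr pi m) psi)) /\
  (exists i, alg_entropy (image_pr pi m) psi = alg_entropy (image_pr (pii i) m) (psii i)).
Proof.
move=> hN hloc hfl hs0 ha haphi hq hcomm hqi hcommi.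
set P := prod_ideal a.
have hP : is_ideal P by apply: gen_ideal.
have hai : forall i x, a i x -> a i (phi x).
  by move=> i x hx; apply: haphi; apply: gen_sub; exists x.
have hPphi : forall x, P x -> P (phi x).
  move=> x hx; apply: (@gen_image_pre _ phi _ P) hx => //.
  - exact: (rmlike_iter phi 1).
  - move=> y [z [[xs [hxs ->]] ->]]; rewrite rmorph_prod; apply: gen_sub.
    by exists (fun i => phi (xs i)); split=> // i; apply: hai.
have hit : forall (b : A -> Prop), (forall x, b x -> b (phi x)) -> forall n x, b x -> b (iter n phi x).
  by move=> b hb; elim=> [|n IH] x hx //=; apply: hb; apply: IH.
have hbm : forall (B : comNzRingType) (p : {rmorphism A -> B}) b, is_ideal b -> quotient_map p b ->
    subset_pr b m.
  move=> B p b hb [_ hk] x hx; apply: NNPP => hnx.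
  case: hloc => _ [_ hu]; have [y hy] := hu x hnx.
  have h1 : b 1%R by rewrite -hy mulrC; apply: idlM.
  have := proj2 (hk 1%R) h1; rewrite rmorph1 => /eqP; by rewrite oner_eq0.
have gen_props : forall (B : comNzRingType) (p : {rmorphism A -> B}) (q : {rmorphism B -> B}) b,
    is_ideal b -> quotient_map p b -> (forall x, q (p x) = p (phi x)) ->
    (forall x, b x -> b (phi x)) ->
    (forall n, (1 <= lambda_it (image_pr p m) q n)%N) /\
    (forall n k, (lambda_it (image_pr p m) q (n + k) <=
                  lambda_it (image_pr p m) q n * lambda_it (image_pr p m) q k)%N).
  move=> B p q b hb hpq hc hbs; split.
  - move=> n; have [_ hl] := lambda_spec hpq n hloc hfl hN hc hb.
    apply: hl; exists (fun k => if k == 0%N then sumI (Jn m phi n) b else @full A); split.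
      by move=> [|k] /=; [apply: sumI_ideal => //; apply: gen_ideal|].
    split=> //; split=> // [[|k]] // _; split=> //.
    exists 1%R; split=> // h1.
    have [_ [hm1 _]] := hloc; apply: hm1.
    apply: (sumI_min (proj1 hloc)) h1; first exact: Jn_sub_m.
    exact: (hbm _ p).
  - move=> n k.
    have [hc1 _] := lambda_spec hpq (n + k) hloc hfl hN hc hb.
    have [_ hl1] := lambda_spec hpq k hloc hfl hN hc hb.
    have [_ hl2] := lambda_spec hpq n hloc hfl hN hc hb.
    have h := SM_J hloc hb (hit b hbs n) hl1 hl2.
    by rewrite mulnC; apply: h.
have [HQ1 HQ2] := gen_props _ _ _ _ hP hq hcomm hPphi.
have HQi := fun i => gen_props _ _ _ _ (ha i) (hqi i) (hcommi i) (hai i).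
set lam := fun n => lambda_it (image_pr pi m) psi n.
set lami := fun i n => lambda_it (image_pr (pii i) m) (psii i) n.
have hle : forall i n, (lami i n <= lam n)%N.
  move=> i n.
  have [hc _] := lambda_spec (hqi i) n hloc hfl hN (hcommi i) (ha i).
  have [_ hl] := lambda_spec hq n hloc hfl hN hcomm hP.
  apply: hl; apply: (chain_ok_mono (I' := sumI (Jn m phi n) (a i))) hc => //.
  by apply: sumI_mono => //; apply: prod_sub_ai.
have [H hH] := gens_exist a hN.
set C := maxn 1 (s * H).
have hub : forall n, exists i, (lam n <= C * lami i n)%N.
  move=> n.
  have hcard : (0 < #|[pred i : 'I_s | true]|)%N by rewrite card_ord.
  have [i0 _ hi0] := eq_bigmax_cond (fun i => lami i n) hcard.
  exists i0.
  have hM : forall i, lenle (sumI (Jn m phi n) (a i)) (@full A) (lami i0 n).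
    move=> i; have [_ hl] := lambda_spec (hqi i) n hloc hfl hN (hcommi i) (ha i).
    apply: (lenle_le _ hl); rewrite -hi0.
    by apply: (@leq_bigmax_cond _ _ (fun j => lami j n) i).
  have hU := UB ha (gen_ideal _) hH hM (leqnn s).
  have [hc _] := lambda_spec hq n hloc hfl hN hcomm hP.
  apply: (leq_trans (hU _ _)).
  - apply: (chain_ok_mono (I' := sumI (Jn m phi n) P)) hc => //.
    by apply: sumI_mono => //; apply: Ws_sub.
  - by rewrite mulnA leq_mul2r leq_maxr orbT.
have hcv := ent_spec lam (fun n => elimT leP (HQ1 n)) (fun n k => elimT leP (HQ2 n k)).
have hcvi : forall i, Un_cv (fun k => Rdiv (ln (INR (lami i k))) (INR k)) (alg_entropy (image_pr (pii i) m) (psii i)).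
  by move=> i; have [h1 h2] := HQi i; exact: (ent_spec (lami i) (fun n => elimT leP (h1 n)) (fun n k => elimT leP (h2 n k))).
have Hl : forall i : 'I_s, List.In i (enum 'I_s) by move=> i; apply: in_In; rewrite mem_enum.
apply: (@ent_max _ (enum 'I_s) Hl (fun k => ln (INR (lam k))) (fun i k => ln (INR (lami i k)))
          _ _ (ln (INR C)) hcv hcvi).
- move=> i k; apply: ln_mono; apply/leP; [have [h1 _] := HQi i; apply: h1|apply: hle].
- move=> k; have [i hi] := hub k; exists i; have [h1 _] := HQi i.
  by apply: ln_bound; apply/leP; [exact: h1|exact: HQ1|exact: hi].
Qed.
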